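(* Let $\Gamma$ be a $(d+1)$-vertex-connected graph with at least $d+1$ vertices, and let $(q,\Gamma)$ be a framework in $\mathbb{R}^d$ with the convex containment property. Then there is a non-symmetric equilibrium stress matrix $\Omega$ of $(q,\Gamma)$ such that for every non-exceptional vertex $i$ and every neighbor $j$ of $i$, $\Omega_{ij}>0$.
   Context: A framework $(q,\Gamma)$ in $\mathbb{R}^d$ has the convex containment property if (1) for each vertex, the positions of its neighbors have affine span of dimension $d$, and (2) there is a set of $d+1$ exceptional vertices such that every other (non-exceptional) vertex $i$ has $q(i)$ in the interior of the convex hull of the positions of its neighbors. A non-symmetric equilibrium stress matrix of $(q,\Gamma)$ is a real matrix $\Omega$ indexed by $V\times V$ with $\Omega(u,w)=0$ whenever $u\ne w$ and $\{u,w\}$ is not an edge, $\sum_w\Omega(u,w)=0$ for all $u$, and $\sum_w\Omega(u,w)q(w)=0$ for all $u$. *)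

(* Defs.v *)
From HB Require Import structures.
From mathcomp Require Import all_boot all_order all_algebra.
From mathcomp Require Import all_classical all_reals all_analysis.
Set Implicit Arguments. Unset Strict Implicit. Unset Printing Implicit Defensive.
Import Order.TTheory GRing.Theory Num.Theory.
Import numFieldTopology.Exports numFieldNormedType.Exports.
Local Open Scope classical_set_scope.
Local Open Scope ring_scope.

Definition simple_graph (V : finType) (e : rel V) : Prop :=
  symmetric e /\ irreflexive e.

Definition nbrs (V : finType) (e : rel V) (i : V) : {set V} := [set j | e i j].

Definition induced_connected (V : finType) (e : rel V) (W : {set V}) : Prop :=
  forall x y, x \in W -> y \in W ->
    connect [rel u v | [&& e u v, u \in W & v \in W]] x y.

(* k-vertex-connected: removing any set of fewer than k vertices leaves a
   connected graph (the vertex-count requirement is a separate hypothesis). *)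
Definition vertex_connected (V : finType) (e : rel V) (k : nat) : Prop :=
  forall S : {set V}, (#|S| < k)%N -> induced_connected e (~: S).

Definition affine_span_full (R : realType) (d : nat) (V : finType)
    (q : V -> 'rV[R]_d) (S : {set V}) : Prop :=
  exists2 j0, j0 \in S &
    row_full (\sum_(j in S) <<q j - q j0>>)%MS.

Definition conv_hull (R : realType) (d : nat) (V : finType)
    (q : V -> 'rV[R]_d) (S : {set V}) : set 'rV[R]_d :=
  [set x | exists lam : V -> R,
     [/\ forall j, 0 <= lam j,
         forall j, j \notin S -> lam j = 0,
         \sum_(j in S) lam j = 1 &
         x = \sum_(j in S) lam j *: q j]].

(* Convex containment property, with X the set of d+1 exceptional vertices. *)
Definition convex_containment (R : realType) (d : nat) (V : finType)
    (e : rel V) (q : V -> 'rV[R]_d) (X : {set V}) : Prop :=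
  [/\ forall i, affine_span_full q (nbrs e i),
      #|X| = d.+1 &
      forall i, i \notin X -> interior (conv_hull q (nbrs e i)) (q i)].

Definition ns_equilibrium_stress (R : realType) (d : nat) (V : finType)
    (e : rel V) (q : V -> 'rV[R]_d) (Om : V -> V -> R) : Prop :=
  [/\ forall u w, u != w -> ~~ e u w -> Om u w = 0,
      forall u, \sum_(w : V) Om u w = 0 &
      forall u, \sum_(w : V) Om u w *: q w = 0].

(* Main.v *)
Require Import Defs.
From HB Require Import structures.
From mathcomp Require Import all_boot all_order all_algebra.
From mathcomp Require Import all_classical all_reals all_analysis.
From mathcomp Require Import ring lra.
Import Order.TTheory GRing.Theory Num.Theory.
Import numFieldTopology.Exports numFieldNormedType.Exports.
Local Open Scope ring_scope.

Lemma pos_weights (R : realType) (d : nat) (V : finType)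
  (q : V -> 'rV[R]_d) (S : {set V}) (x : 'rV[R]_d) :
  interior (conv_hull q S) x ->
  exists lam : V -> R, [/\ forall j, j \in S -> 0 < lam j,
     forall j, j \notin S -> lam j = 0,
     \sum_(j in S) lam j = 1 & x = \sum_(j in S) lam j *: q j].
Proof.
move=> hint.
have [lam0 [_ _ s1 _]] := interior_subset hint.
have Sn : (0 < #|S|)%N.
  rewrite lt0n; apply/negP => /eqP /cards0_eq S0.
  by move: s1; rewrite S0 big_set0 => /eqP; rewrite eq_sym oner_eq0.
set n : R := #|S|%:R.
have n0 : 0 < n by rewrite ltr0n.
set c := n^-1 *: \sum_(j in S) q j.
move/nbhs_ballP: hint => [eps /= eps0 hball].
set t := eps / (2 * (`|x - c| + 1)).
have t0 : 0 < t by rewrite divr_gt0 // mulr_gt0 // ltr_wpDl.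
set y := x + t *: (x - c).
have : conv_hull q S y.
  apply: hball; rewrite -ball_normE /= /y opprD addrA subrr add0r normrN normrZ.
  rewrite gtr0_norm //.
  have ha : 0 <= `|x - c| by [].
  have ht : t * (2 * (`|x - c| + 1)) = eps.
    by rewrite /t mulfVK // gt_eqF // mulr_gt0 // ltr_wpDl.
  nra.
move=> [mu [mu0 muS smu ey]].
exists (fun j => if j \in S then (mu j + t / n) / (1 + t) else 0); split.
- move=> j ->; apply: divr_gt0; last by rewrite addr_gt0.
  by apply: (le_lt_trans (mu0 j)); rewrite ltrDl divr_gt0.
- by move=> j /negbTE ->.
- rewrite (eq_bigr (fun j => (mu j + t / n) / (1 + t))); last by move=> j ->.
  rewrite -mulr_suml big_split /= smu sumr_const -/n.
  rewrite -mulr_natr mulrAC -mulrA mulfV ?gt_eqF // mulr1 mulfV //.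
  by rewrite gt_eqF // addr_gt0.
- rewrite (eq_bigr (fun j => (1 + t)^-1 *: (mu j *: q j + (t / n) *: q j)));
    last by move=> j ->; rewrite -scalerDl scalerA mulrC.
  rewrite -scaler_sumr big_split /= -ey -scaler_sumr.
  have -> : (t / n) *: \sum_(j in S) q j = t *: c by rewrite /c scalerA.
  rewrite /y -addrA -scalerDr addrNK -[X in X + t *: x]scale1r -scalerDl.
  by rewrite scalerA mulVf ?scale1r // gt_eqF // addr_gt0.
Qed.
Lemma sum_out (V : finType) (M : zmodType) (S : {set V}) (f : V -> M) :
  (forall j, j \notin S -> f j = 0) -> \sum_(j in S) f j = \sum_j f j.
Proof.
move=> h; rewrite big_mkcond /=; apply: eq_bigr => j _.
by case: ifP => // /negbT /h ->.
Qed.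

Arguments sum_out {V M S f}.

Lemma sum_delta (V : finType) (M : zmodType) (u : V) (f : V -> M) :
  \sum_w (if w == u then f w else 0) = f u.
Proof.
by rewrite -big_mkcond big_pred1_eq.
Qed.

Arguments sum_delta {V M u f}.

Theorem lemma5p6 (R : realType) (d : nat) (V : finType) (e : rel V)
    (q : V -> 'rV[R]_d) (X : {set V}) :
  simple_graph e ->
  vertex_connected e d.+1 ->
  (d.+1 <= #|V|)%N ->
  convex_containment e q X ->
  exists Om : V -> V -> R,
    ns_equilibrium_stress e q Om /\
    (forall i j, i \notin X -> e i j -> 0 < Om i j).
Proof.
move=> [_ irr] _ _ [_ _ hint].
have : forall i, exists lam : V -> R, i \notin X ->
  [/\ forall j, j \in nbrs e i -> 0 < lam j,
     forall j, j \notin nbrs e i -> lam j = 0,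
     \sum_(j in nbrs e i) lam j = 1 & q i = \sum_(j in nbrs e i) lam j *: q j].
  move=> i; case: (boolP (i \in X)) => iX.
    by exists (fun _ => 0).
  have [lam H] := @pos_weights _ _ _ _ _ _ (hint i iX).
  by exists lam.
move=> /choice [lam hlam].
exists (fun u w => if u \in X then 0 else lam u w - (if w == u then 1 else 0)).
split; last first.
  move=> i j iX eij; rewrite (negbTE iX).
  have [pos _ _ _] := hlam i iX.
  have -> : (j == i) = false.
    by apply/negP => /eqP ji; move: eij; rewrite ji irr.
  by rewrite subr0 pos // inE.
split.
- move=> u w uw euw; case: ifP => // /negbT uX.
  have [_ z _ _] := hlam u uX.
  rewrite z ?inE // ifN_eqC // subr0 //.
- move=> u; case: (boolP (u \in X)) => uX; first by apply: big1.
  rewrite (eq_bigr (fun w => lam u w - (if w == u then 1 else 0))); last first.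
    by move=> w _; rewrite ?(negbTE uX).
  have [_ z s _] := hlam u uX.
  rewrite sumrB (sum_delta (f := fun _ => 1)) -(sum_out z) s.
  by rewrite subrr.
- move=> u; case: (boolP (u \in X)) => uX; first by apply: big1 => w _; rewrite scale0r.
  have [_ z _ qu] := hlam u uX.
  rewrite (eq_bigr (fun w => lam u w *: q w - (if w == u then q w else 0))); last first.
    by move=> w _; rewrite ?(negbTE uX) scalerBl; case: ifP; rewrite ?scale1r ?scale0r.
  rewrite sumrB (sum_delta (f := q)) -(sum_out (S := nbrs e u) (f := fun w => lam u w *: q w)) -?qu ?subrr //.
  by move=> j /z ->; rewrite scale0r.
Qed.
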